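(* Let $Q$ be an admissible orientation of $\tilde A_n$ and let $I,J$ be two-sided ideals of $\Bbbk Q$. Then the multiplication map $\varphi_{I,J}:I\otimes_{\Bbbk Q}J\to IJ$, $a\otimes b\mapsto ab$, is an isomorphism of $\Bbbk Q$-$\Bbbk Q$-bimodules.
   Context: $\Bbbk$ is an algebraically closed field. An admissible orientation of $\tilde A_n$ is a finite quiver with $n$ vertices whose underlying undirected graph is a cycle, with no oriented cycle and at least one source. $IJ$ denotes the ideal spanned by all products $ab$ with $a\in I$, $b\in J$. *)

(* Defs.v *)
From HB Require Import structures.
From mathcomp Require Import all_boot all_order all_algebra.
Set Implicit Arguments. Unset Strict Implicit. Unset Printing Implicit Defensive.
Import GRing.Theory.
Local Open Scope ring_scope.

Section PathAlgebra.
Variables (K : fieldType) (V E : finType) (s t : E -> V).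

(* A path is a starting vertex v and a list of arrows e1 ... ek
   (traversed left to right); the trivial path at v is (v, [::]). *)
Fixpoint path_ok (v : V) (p : seq E) : bool :=
  if p is e :: p' then (s e == v) && path_ok (t e) p' else true.

Fixpoint path_end (v : V) (p : seq E) : V :=
  if p is e :: p' then path_end (t e) p' else v.

(* Elements of the path algebra: K-valued functions on (v, p),
   vanishing outside genuine paths (finitely many, Q being acyclic). *)
Definition pelt := V -> seq E -> K.

Definition in_kQ (f : pelt) : Prop := forall v p, ~~ path_ok v p -> f v p = 0.

Definition pzero : pelt := fun _ _ => 0.
Definition padd (f g : pelt) : pelt := fun v p => f v p + g v p.
Definition popp (f : pelt) : pelt := fun v p => - f v p.

(* Product = linear extension of concatenation of paths
   (path p1 followed by path p2 when end(p1) = start(p2), else 0). *)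
Definition pmul (f g : pelt) : pelt := fun v p =>
  \sum_(i < (size p).+1) f v (take i p) * g (path_end v (take i p)) (drop i p).

Definition is_ideal (I : pelt -> Prop) : Prop :=
  [/\ forall x, I x -> in_kQ x,
      I pzero,
      forall x y, I x -> I y -> I (padd x y),
      forall x, I x -> I (popp x) &
      forall a x, in_kQ a -> I x -> I (pmul a x) /\ I (pmul x a)].

Inductive prod_ideal (I J : pelt -> Prop) : pelt -> Prop :=
  | pi_mul a b : I a -> J b -> prod_ideal I J (pmul a b)
  | pi_zero : prod_ideal I J pzero
  | pi_add x y : prod_ideal I J x -> prod_ideal I J y -> prod_ideal I J (padd x y).

(* The multiplication map I (x)_{kQ} J -> IJ, a (x) b |-> ab, is an
   isomorphism: i.e. (IJ, (a,b) |-> ab) satisfies the universal property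
   of the tensor product I (x)_{kQ} J: every kQ-balanced biadditive map
   beta : I x J -> W into an abelian group factors uniquely through an
   additive map IJ -> W. *)
Definition mult_map_iso (I J : pelt -> Prop) : Prop :=
  forall (W : zmodType) (beta : pelt -> pelt -> W),
    (forall a a' b, I a -> I a' -> J b -> beta (padd a a') b = beta a b + beta a' b) ->
    (forall a b b', I a -> J b -> J b' -> beta a (padd b b') = beta a b + beta a b') ->
    (forall a x b, I a -> in_kQ x -> J b -> beta (pmul a x) b = beta a (pmul x b)) ->
    exists g : pelt -> W,
      [/\ forall x y, prod_ideal I J x -> prod_ideal I J y -> g (padd x y) = g x + g y,
          forall a b, I a -> J b -> g (pmul a b) = beta a b &
          forall g' : pelt -> W,
            (forall x y, prod_ideal I J x -> prod_ideal I J y -> g' (padd x y) = g' x + g' y) ->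
            (forall a b, I a -> J b -> g' (pmul a b) = beta a b) ->
            forall x, prod_ideal I J x -> g' x = g x].

End PathAlgebra.

Definition underlying_cycle (n : nat) (V E : finType) (s t : E -> V) : Prop :=
  exists (vx : 'I_n -> V) (ar : 'I_n -> E),
    [/\ bijective vx, bijective ar &
        forall i, ((s (ar i) == vx i) && (t (ar i) == vx (ordS i)))
               || ((s (ar i) == vx (ordS i)) && (t (ar i) == vx i))].

Definition no_oriented_cycle (V E : finType) (s t : E -> V) : Prop :=
  forall v p, path_ok s t v p -> p != [::] -> path_end t v p != v.

Definition has_source (V E : finType) (s t : E -> V) : Prop :=
  exists v : V, forall e : E, t e != v.

Definition admissible_Atilde (n : nat) (V E : finType) (s t : E -> V) : Prop :=
  [/\ underlying_cycle n s t, no_oriented_cycle s t & has_source s t].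

(* Main.v *)
Require Import Defs.
From mathcomp Require Import all_boot all_order all_algebra.
From Stdlib Require Import Classical FunctionalExtensionality.
Set Implicit Arguments. Unset Strict Implicit. Unset Printing Implicit Defensive.
Import GRing.Theory.
Local Open Scope ring_scope.
Section Alg.
Variables (K : fieldType) (V E : finType) (s t : E -> V).
Notation pel := (pelt K V E).
Notation mul := (@pmul K V E t).

Lemma pfunext (f g : pel) : (forall v q, f v q = g v q) -> f = g.
Proof. move=> H; do 2 (apply: functional_extensionality => ?); exact: H. Qed.

Lemma pmul_nil f g v : mul f g v [::] = f v [::] * g v [::].
Proof. by rewrite /pmul big_ord_recl big_ord0 /= addr0. Qed.

Lemma pmul_cons f g v e p :
  mul f g v (e :: p) = f v [::] * g v (e :: p) + mul (fun _ q => f v (e :: q)) g (t e) p.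
Proof.
rewrite /pmul big_ord_recl /=; congr (_ + _).
Qed.

Lemma pmul_ext f f' g v p : (forall q, f v q = f' v q) -> mul f g v p = mul f' g v p.
Proof. by move=> H; apply: eq_bigr => i _; rewrite H. Qed.

Lemma pmul_addl f f' g v p : mul (padd f f') g v p = mul f g v p + mul f' g v p.
Proof. by rewrite /pmul -big_split; apply: eq_bigr => i _; rewrite /padd mulrDl. Qed.

Lemma pmul_addr f g g' v p : mul f (padd g g') v p = mul f g v p + mul f g' v p.
Proof. by rewrite /pmul -big_split; apply: eq_bigr => i _; rewrite /padd mulrDr. Qed.

Lemma pmul_oppl f g v p : mul (popp f) g v p = - mul f g v p.
Proof. by rewrite /pmul -sumrN; apply: eq_bigr => i _; rewrite /popp mulNr. Qed.

Lemma pmul_scalel c f g v p : mul (fun w q => c * f w q) g v p = c * mul f g v p.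
Proof. by rewrite /pmul mulr_sumr; apply: eq_bigr => i _; rewrite mulrA. Qed.

Lemma pmul_assoc f g h v p : mul (mul f g) h v p = mul f (mul g h) v p.
Proof.
elim: p f v => [|e p IH] f v; first by rewrite !pmul_nil mulrA.
rewrite !pmul_cons pmul_nil.
rewrite (@pmul_ext _ (padd (fun w q => f v [::] * g v (e :: q))
     (mul (fun _ q => f v (e :: q)) g))); last first.
  by move=> q; rewrite pmul_cons.
rewrite pmul_addl pmul_scalel IH.
by rewrite mulrDr !mulrA addrA.
Qed.

Lemma pmul_vanish x y v q :
  (forall i, (i <= size q)%N -> x v (take i q) = 0) -> mul x y v q = 0.
Proof.
move=> H; apply: big1 => i _; rewrite H ?mul0r //.
by rewrite -ltnS ltn_ord.
Qed.

Lemma pmul_deriv x y v0 q0 :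
  (forall i, (i < size q0)%N -> x v0 (take i q0) = 0) ->
  forall r, mul x y v0 (q0 ++ r) =
            mul (fun _ r' => x v0 (q0 ++ r')) y (path_end t v0 q0) r.
Proof.
elim: q0 v0 x => [|e q IH] v0 x H r /=; first by apply: pmul_ext.
rewrite pmul_cons (H 0%N) // mul0r add0r.
rewrite (IH (t e) (fun _ q' => x v0 (e :: q'))) //.
by move=> i Hi; apply: (H i.+1).
Qed.

Lemma path_ok_cat v p r :
  path_ok s t v (p ++ r) = path_ok s t v p && path_ok s t (path_end t v p) r.
Proof. by elim: p v => [|e p IH] v //=; rewrite IH andbA. Qed.

End Alg.

Section Main.
Variables (K : fieldType) (V E : finType) (s t : E -> V).
Notation pel := (pelt K V E).
Notation mul := (@pmul K V E t).
Variable I : pel -> Prop.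
Hypothesis HI : is_ideal s t I.

Definition FP (P : V -> seq E -> bool) (x : pel) := forall v q, P v q -> x v q = 0.

Definition DB (P : V -> seq E -> bool) := exists m (ns : 'I_m -> pel) (fs : 'I_m -> pel -> pel),
 [/\ forall j, I (ns j),
     forall j x, I x -> FP P x -> in_kQ s t (fs j x),
     forall j x y, I x -> FP P x -> I y -> FP P y -> fs j (padd x y) = padd (fs j x) (fs j y),
     forall j x y, I x -> FP P x -> in_kQ s t y -> fs j (mul x y) = mul (fs j x) y &
     forall x, I x -> FP P x -> forall v q, x v q = \sum_(j < m) mul (ns j) (fs j x) v q].

Lemma DB_ext (P P' : V -> seq E -> bool) : (forall v q, P v q = P' v q) -> DB P' -> DB P.
Proof.
move=> H; have -> : P = P' by do 2 (apply: functional_extensionality => ?); exact: H.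
done.
Qed.

Lemma step (P : V -> seq E -> bool) v0 q0 :
  (forall v q i, P v q -> (i < size q)%N -> P v (take i q)) ->
  (forall i, (i < size q0)%N -> P v0 (take i q0)) ->
  DB (fun v q => P v q || ((v == v0) && (q == q0))) -> DB P.
Proof.
move=> H1 H2 [m [ns [fs [Hn Hk Ha Hm Hd]]]].
have [IkQ I0 Iadd Iopp Imul] := HI.
pose P' := fun v q => P v q || ((v == v0) && (q == q0)).
have FPP : forall x, FP P x -> x v0 q0 = 0 -> FP P' x.
  move=> x Fx x0 v q /orP [Pvq|/andP [/eqP -> /eqP ->]] //; exact: Fx.
have FPmul : forall x y, FP P x -> FP P (mul x y).
  move=> x y Fx v q Pvq; apply: pmul_vanish => i Hi.
  case: (ltnP i (size q)) => Hi'; first by apply: Fx; apply: H1.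
  by rewrite take_oversize //; apply: Fx.
case: (classic (exists n, [/\ I n, FP P n & n v0 q0 != 0])) => [[n [In Fn nz]] | Hno]; last first.
  have Z : forall x, I x -> FP P x -> x v0 q0 = 0.
    move=> x Ix Fx; case: (eqVneq (x v0 q0) 0) => // H; exfalso; apply: Hno.
    by exists x.
  exists m, ns, fs; split => //.
  - by move=> j x Ix Fx; apply: Hk => //; apply: FPP => //; apply: Z.
  - by move=> j x y Ix Fx Iy Fy; apply: Ha => //; apply: FPP => //; apply: Z.
  - by move=> j x y Ix Fx ky; apply: Hm => //; apply: FPP => //; apply: Z.
  - by move=> x Ix Fx; apply: Hd => //; apply: FPP => //; apply: Z.
set lam := n v0 q0.
set w0 := path_end t v0 q0.
pose f (x : pel) : pel := fun w r => if w == w0 then lam^-1 * x v0 (q0 ++ r) else 0.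
pose res (x : pel) : pel := padd x (popp (mul n (f x))).
have fK : forall x, in_kQ s t x -> in_kQ s t (f x).
  move=> x kx w r nok; rewrite /f; case: eqP => // Hw.
  move: nok; rewrite Hw => nok.
  by rewrite kx ?mulr0 // path_ok_cat negb_and nok orbT.
have fA : forall x y, f (padd x y) = padd (f x) (f y).
  move=> x y; apply: pfunext => w r; rewrite /f /padd; case: eqP => _.
    by rewrite mulrDr.
  by rewrite addr0.
have fM : forall x y, FP P x -> f (mul x y) = mul (f x) y.
  move=> x y Fx; apply: pfunext => w r; rewrite /f; case: eqP => [->|ne].
    rewrite (@pmul_deriv _ _ _ t x y v0 q0); last first.
      by move=> i Hi; apply: Fx; apply: H2.
    rewrite -pmul_scalel; apply: pmul_ext => q /=.
    by rewrite eqxx.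
  symmetry; apply: pmul_vanish => i _.
  by case: eqP.
have nv : forall i, (i < size q0)%N -> n v0 (take i q0) = 0.
  by move=> i Hi; apply: Fn; apply: H2.
have resI : forall x, I x -> FP P x -> I (res x).
  move=> x Ix Fx; apply: Iadd => //; apply: Iopp.
  by apply: (Imul _ _ _ In).2; apply: fK; apply: IkQ.
have resF : forall x, I x -> FP P x -> FP P' (res x).
  move=> x Ix Fx; apply: FPP.
    move=> v q Pvq; rewrite /res /padd /popp Fx // add0r.
    by have := FPmul n (f x) Fn v q Pvq => ->; rewrite oppr0.
  rewrite /res /padd /popp.
  have := @pmul_deriv _ _ _ t n (f x) v0 q0 nv [::]; rewrite cats0 => ->.
  rewrite pmul_nil /f eqxx cats0 /lam mulrA mulfV // mul1r subrr //.
have resA : forall x y, res (padd x y) = padd (res x) (res y).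
  move=> x y; apply: pfunext => w r.
  by rewrite /res fA /padd /popp pmul_addr opprD addrACA.
have resM : forall x y, FP P x -> res (mul x y) = mul (res x) y.
  move=> x y Fx; apply: pfunext => w r.
  rewrite /res fM // /padd /popp pmul_addl pmul_oppl pmul_assoc //.
pose ns' (i : 'I_m.+1) := if unlift ord0 i is Some j then ns j else n.
pose fs' (i : 'I_m.+1) := if unlift ord0 i is Some j then (fun x => fs j (res x)) else f.
exists m.+1, ns', fs'; split.
- by move=> i; rewrite /ns'; case: unliftP => [j _|_].
- move=> i x Ix Fx; rewrite /fs'; case: unliftP => [j _|_].
    by apply: Hk; [apply: resI | apply: resF].
  by apply: fK; apply: IkQ.
- move=> i x y Ix Fx Iy Fy; rewrite /fs'; case: unliftP => [j _|_].
    by rewrite resA Ha //; [apply: resI | apply: resF | apply: resI | apply: resF].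
  by apply: fA.
- move=> i x y Ix Fx ky; rewrite /fs'; case: unliftP => [j _|_].
    by rewrite resM // Hm //; [apply: resI | apply: resF].
  by apply: fM.
- move=> x Ix Fx v q; rewrite big_ord_recl /ns' /fs' unlift_none.
  under eq_bigr => j _ do rewrite liftK.
  rewrite -Hd; [|apply: resI => // | apply: resF => //].
  by rewrite /res /padd /popp addrC subrK.
Qed.


Lemma levA l (a : seq (V * seq E)) :
  DB (fun v q => (size q < l)%N || (((v, q) \in a) && (size q == l))) ->
  DB (fun v q => (size q < l)%N).
Proof.
elim: a => [|[v0 q0] a IH] H.
  by apply: DB_ext H => v q; rewrite in_nil orbF.
apply: IH.
case: (eqVneq (size q0) l) => Hs; last first.
  apply: DB_ext H => v q; rewrite in_cons xpair_eqE.
  case: (v == v0) => /=; case: (q =P q0) => [->|_] /=; by rewrite ?(negbTE Hs) ?andbF ?orbF.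
apply: (@step _ v0 q0).
- move=> v q i /orP [H'|/andP [_ /eqP H']] Hi; rewrite size_take Hi; apply/orP; left.
    exact: ltn_trans Hi H'.
  by rewrite -H'.
- by move=> i Hi /=; rewrite size_take Hi -Hs Hi.
apply: DB_ext H => v q; rewrite in_cons xpair_eqE.
case: (v =P v0) => [->|] /=; case: (q =P q0) => [->|] //=; rewrite ?Hs ?eqxx /= ?orbT ?orbF //.
Qed.

Fixpoint seqs (l : nat) : seq (seq E) :=
  if l is l'.+1 then [seq e :: q | e <- enum E, q <- seqs l'] else [:: [::]].

Lemma mem_seqs l q : size q = l -> q \in seqs l.
Proof.
elim: l q => [|l IH] [|e q] //= [Hq].
by apply: (allpairs_f (fun e q => e :: q)); [rewrite mem_enum | apply: IH].
Qed.

Lemma lev l : DB (fun v q => (size q < l.+1)%N) -> DB (fun v q => (size q < l)%N).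
Proof.
move=> H; apply: (@levA l [seq (v, q) | v <- enum V, q <- seqs l]).
apply: DB_ext H => v q /=.
case: (ltngtP (size q) l) => Hq.
- by rewrite /= ltnS ltnW.
- by rewrite andbF /= ltnS leqNgt Hq.
- by rewrite andbT /= Hq ltnS leqnn (allpairs_f (fun v q => (v, q))) ?mem_enum ?mem_seqs.
Qed.

Lemma levs d l : DB (fun v q => (size q < l + d)%N) -> DB (fun v q => (size q < l)%N).
Proof.
elim: d l => [|d IH] l H; first by move: H; rewrite addn0.
by apply: IH; apply: lev; rewrite -addnS.
Qed.

End Main.

Section Bound.
Variables (V E : finType) (s t : E -> V).
Hypothesis NC : no_oriented_cycle s t.

Fixpoint verts v (p : seq E) : seq V :=
  v :: (if p is e :: p' then verts (t e) p' else [::]).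

Lemma size_verts v p : size (verts v p) = (size p).+1.
Proof. by elim: p v => [|e p IH] v //=; rewrite IH. Qed.

Lemma mem_verts u p w : w \in verts u p -> exists i, path_end t u (take i p) = w.
Proof.
elim: p u => [|e p IH] u /=.
  by rewrite inE => /eqP ->; exists 0%N.
rewrite inE => /orP [/eqP ->|/IH [i Hi]]; first by exists 0%N.
by exists i.+1.
Qed.

Lemma ok_take u p i : path_ok s t u p -> path_ok s t u (take i p).
Proof.
elim: p u i => [|e p IH] u [|i] //= /andP [-> H] /=; exact: IH.
Qed.

Lemma uniq_verts v p : path_ok s t v p -> uniq (verts v p).
Proof.
elim: p v => [|e p IH] v //= /andP [/eqP se ok].
rewrite IH // andbT; apply/negP => /mem_verts [i Hi].
have := NC (p := e :: take i p) (v := v).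
rewrite /= se eqxx ok_take //= Hi eqxx.
by move=> /(_ isT isT).
Qed.

Lemma path_bound v p : path_ok s t v p -> (size p < #|V|)%N.
Proof.
move=> ok; rewrite -ltnS -(size_verts v p) -(card_uniqP (uniq_verts ok)) ltnS.
by rewrite max_card.
Qed.
End Bound.

Section Final.
Variables (K : fieldType) (V E : finType) (s t : E -> V).
Notation pel := (pelt K V E).
Notation mul := (@pmul K V E t).
Notation pz := (@pzero K V E).
Variables (I J : pel -> Prop).
Hypothesis HI : is_ideal s t I.
Hypothesis HJ : is_ideal s t J.

Lemma padd00 : padd pz pz = pz.
Proof. by apply: pfunext => v q; rewrite /padd /pzero addr0. Qed.

Lemma pmul_z0 (f : pel) : mul f pz = pz.
Proof. by apply: pfunext => v q; apply: big1 => i _; rewrite /pzero mulr0. Qed.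

Lemma add_zero (W : zmodType) (h : pel -> W) (Pr : pel -> Prop) :
  Pr pz -> (forall x y, Pr x -> Pr y -> h (padd x y) = h x + h y) -> h pz = 0.
Proof.
move=> P0 H; have := H _ _ P0 P0; rewrite padd00 => E0.
by apply: (@addrI _ (h pz)); rewrite addr0 -E0.
Qed.

Lemma base N : (forall v p, path_ok s t v p -> (size p < N)%N) ->
  DB s t I (fun v q => (size q < N)%N).
Proof.
move=> bnd; have [IkQ _ _ _ _] := HI.
exists 0%N, (fun _ => pz), (fun _ x => x); split; try by case.
move=> x Ix Fx v q; rewrite big_ord0.
case: (ltnP (size q) N) => H; first exact: Fx.
apply: (IkQ x Ix); apply/negP => ok; have := bnd _ _ ok; by rewrite ltnNge H.
Qed.

Lemma final : DB s t I (fun v q => (size q < 0)%N) -> mult_map_iso s t I J.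
Proof.
move=> [m [ns [fs [Hn Hk Ha Hm Hd]]]].
have [IkQ I0 Iadd Iopp Imul] := HI.
have [JkQ J0 Jadd Jopp Jmul] := HJ.
have F0 : forall x : pel, FP (fun v q => (size q < 0)%N) x by [].
have IJI : forall x, prod_ideal t I J x -> I x.
  move=> x; elim => [a b Ia Jb| |x' y' _ Hx _ Hy]; first by apply: (Imul _ _ (JkQ _ Jb) Ia).2.
    exact: I0.
  exact: Iadd.
have fs0 : forall j, fs j pz = pz.
  move=> j; rewrite -{1}(pmul_z0 pz) Hm ?pmul_z0 //; exact: I0.
have fsJ : forall j x, prod_ideal t I J x -> J (fs j x).
  move=> j x; elim => [a b Ia Jb| |x' y' Px Hx Py Hy].
  - by rewrite Hm //; [apply: (Jmul _ _ _ Jb).1; apply: Hk | apply: JkQ].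
  - by rewrite fs0.
  - by rewrite Ha //; [apply: Jadd | apply: IJI | apply: IJI].
move=> W beta b1 b2 b3.
have bz : forall b, J b -> beta pz b = 0.
  move=> b Jb; apply: (@add_zero W (fun a => beta a b) I) => // x y Ix Iy; exact: b1.
have bsum : forall b, J b -> forall k (F : 'I_k -> pel), (forall j, I (F j)) ->
   I (fun v q => \sum_(j < k) F j v q) /\
   beta (fun v q => \sum_(j < k) F j v q) b = \sum_(j < k) beta (F j) b.
  move=> b Jb; elim => [|k IH] F HF.
    have -> : (fun v q => \sum_(j < 0) F j v q) = pz.
      by apply: pfunext => v q; rewrite big_ord0.
    by rewrite big_ord0; split; [exact: I0 | exact: bz].
  have -> : (fun v q => \sum_(j < k.+1) F j v q) =
      padd (fun v q => \sum_(j < k) F (widen_ord (leqnSn k) j) v q) (F ord_max).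
    by apply: pfunext => v q; rewrite big_ord_recr.
  have [IH1 IH2] := IH (fun j => F (widen_ord (leqnSn k) j)) (fun j => HF _).
  split; first exact: Iadd.
  by rewrite b1 // IH2 big_ord_recr.
pose g (x : pel) := \sum_(j < m) beta (ns j) (fs j x).
have gA : forall x y, prod_ideal t I J x -> prod_ideal t I J y -> g (padd x y) = g x + g y.
  move=> x y Px Py; rewrite /g -big_split; apply: eq_bigr => j _.
  by rewrite Ha //; [rewrite b2 //; apply: fsJ | apply: IJI | apply: IJI].
have gM : forall a b, I a -> J b -> g (pmul t a b) = beta a b.
  move=> a b Ia Jb; rewrite /g.
  transitivity (\sum_(j < m) beta (mul (ns j) (fs j a)) b).
    apply: eq_bigr => j _; rewrite Hm //; last exact: JkQ.
    by rewrite b3 //; apply: Hk.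
  have HF : forall j, I (mul (ns j) (fs j a)).
    by move=> j; apply: (Imul _ _ (Hk j a Ia (F0 a)) (Hn j)).2.
  have [_ <-] := bsum b Jb m (fun j => mul (ns j) (fs j a)) HF.
  congr (beta _ b); apply: pfunext => v q; by rewrite -Hd.
exists g; split => // g' g'A g'M x; elim => [a b Ia Jb| |x' y' Px Hx Py Hy].
- by rewrite g'M // gM.
- rewrite (@add_zero W g' (prod_ideal t I J)) //; last exact: pi_zero.
  by rewrite (@add_zero W g (prod_ideal t I J)) //; exact: pi_zero.
- by rewrite g'A // gA // Hx Hy.
Qed.

End Final.

Theorem lemma10 (k : closedFieldType) (n : nat) (V E : finType) (s t : E -> V)
  (I J : pelt k V E -> Prop) :
  admissible_Atilde n s t ->
  is_ideal s t I -> is_ideal s t J ->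
  mult_map_iso s t I J.
Proof.
move=> [_ NC _] HI HJ; apply: final => //.
apply: (@levs _ _ _ _ _ _ HI #|V| 0); rewrite add0n.
apply: (base HI) => v p; exact: path_bound.
Qed.
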